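(* Let $S$ be a local ring, let $a_1,\ldots,a_d$ be a regular sequence in $S$, and let $J=(a_1,\ldots,a_d)$. Let $L$ be an $S$-module of finite length with $J\subseteq \operatorname{ann} L$. Then for every integer $n\geq 1$, $$\lambda\big(\operatorname{Tor}_1^S(L,S/J^n)\big)=\binom{n+d-1}{d-1}\lambda(L).$$
   Context: $\lambda(M)$ denotes the length of an $S$-module $M$. *)

(* Defs.v *)
From HB Require Import structures.
From mathcomp Require Import all_boot all_order all_algebra.
From Stdlib Require List.
Set Implicit Arguments. Unset Strict Implicit. Unset Printing Implicit Defensive.
Import Order.TTheory GRing.Theory.
Local Open Scope ring_scope.

Section CommAlg.
Variable S : comNzRingType.

Definition is_ideal (P : S -> Prop) : Prop :=
  P 0 /\ (forall x y, P x -> P y -> P (x + y)) /\ (forall r x, P x -> P (r * x)).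

Definition is_maximal_ideal (M : S -> Prop) : Prop :=
  is_ideal M /\ ~ M 1 /\
  (forall N : S -> Prop, is_ideal N -> ~ N 1 -> (forall x, M x -> N x) ->
     forall x, N x -> M x).

Definition local_ring : Prop :=
  exists M, is_maximal_ideal M /\
    forall N, is_maximal_ideal N -> forall x, N x <-> M x.

Definition ideal_of {I : Type} (Q : I -> Prop) (g : I -> S) (x : S) : Prop :=
  exists s : seq (S * I), (forall p, List.In p s -> Q p.2) /\
    x = \sum_(p <- s) p.1 * g p.2.

Definition regular_sequence (d : nat) (a : 'I_d -> S) : Prop :=
  (forall i : 'I_d, forall x : S,
     ideal_of (fun j : 'I_d => (j < i)%N) a (a i * x) ->
     ideal_of (fun j : 'I_d => (j < i)%N) a x) /\
  ~ ideal_of (fun _ => True) a 1.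

Section Modules.
Variable V : lmodType S.

Definition is_submodule (P : V -> Prop) : Prop :=
  P 0 /\ forall (r : S) x y, P x -> P y -> P (r *: x + y).

Definition strict_chain (B Z : V -> Prop) (k : nat) (c : nat -> V -> Prop) : Prop :=
  (forall i, (i <= k)%N -> is_submodule (c i)) /\
  (forall x, c 0%N x <-> B x) /\ (forall x, c k x <-> Z x) /\
  (forall i, (i < k)%N -> (forall x, c i x -> c i.+1 x) /\ exists x, c i.+1 x /\ ~ c i x).

Definition quot_length (B Z : V -> Prop) (n : nat) : Prop :=
  (exists c, strict_chain B Z n c) /\
  (forall k c, strict_chain B Z k c -> (k <= n)%N).

End Modules.

Definition module_length (L : lmodType S) (n : nat) : Prop :=
  quot_length (fun x : L => x = 0) (fun _ => True) n.

Definition annihilates (P : S -> Prop) (L : lmodType S) : Prop :=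
  forall r, P r -> forall x : L, r *: x = 0.

(* Tor_1^S(L, S/I) where I is the ideal generated by g : I -> S (I finite).
   Computed from the free presentation  F2 -> S^I -> S -> S/I -> 0
   (S^I -> S sends e_i to g i; F2 maps onto the syzygies of g):
   after tensoring with L, Tor_1 = Z / B with
     Z = { f in L^I | sum_i g i *: f i = 0 },
     B = image of L (x) Syz(g) = span { (k i *: y)_i | k syzygy, y in L }. *)
Definition tor1_cycles {I : finType} (g : I -> S) (L : lmodType S)
  (f : {ffun I -> L}) : Prop := \sum_i g i *: f i = 0.

Definition syzygy {I : finType} (g : I -> S) (k : I -> S) : Prop :=
  \sum_i k i * g i = 0.

Definition tor1_boundaries {I : finType} (g : I -> S) (L : lmodType S)
  (f : {ffun I -> L}) : Prop :=
  exists s : seq ((I -> S) * L), (forall p, List.In p s -> syzygy g p.1) /\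
    f = \sum_(p <- s) [ffun i => p.1 i *: p.2].

Definition tor1_length {I : finType} (g : I -> S) (L : lmodType S) (n : nat) : Prop :=
  quot_length (tor1_boundaries g (L := L)) (tor1_cycles g (L := L)) n.

(* the monomials of degree n in a_1..a_d: these generate J^n *)
Definition pow_gens (d n : nat) (a : 'I_d -> S) (t : n.-tuple 'I_d) : S :=
  \prod_(j <- t) a j.

End CommAlg.

(* binomial coefficient with an integer lower index, 'C(m, k) = 0 for k < 0
   (standard convention; matters only for d = 0 in binom(n+d-1, d-1)) *)
Definition binomZ (m : nat) (k : int) : nat :=
  match k with Posz k' => 'C(m, k') | Negz _ => 0%N end.

(* Main.v *)
Require Import Defs.
From mathcomp Require Import all_boot all_order all_algebra.
From Stdlib Require Import Classical ClassicalEpsilon.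
Set Implicit Arguments. Unset Strict Implicit. Unset Printing Implicit Defensive.
Import Order.TTheory GRing.Theory.
Local Open Scope ring_scope.

Section QR.
Variable S : comNzRingType.
Variable a : nat -> S.

Definition inJ (k : nat) (x : S) : Prop :=
  exists s : seq (S * nat), (forall p, p \in s -> (p.2 < k)%N) /\
    x = \sum_(p <- s) p.1 * a p.2.

Lemma inJ0 k : inJ k 0.
Proof. by exists [::]; split => //; rewrite big_nil. Qed.

Lemma inJD k x y : inJ k x -> inJ k y -> inJ k (x + y).
Proof.
move=> [s1 [H1 ->]] [s2 [H2 ->]]; exists (s1 ++ s2); split; last by rewrite big_cat.
by move=> p; rewrite mem_cat => /orP [/H1|/H2].
Qed.

Lemma inJM k r x : inJ k x -> inJ k (r * x).
Proof.
move=> [s [H ->]]; exists (map (fun p => (r * p.1, p.2)) s); split.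
  by move=> p /mapP [q /H qs ->].
by rewrite big_map mulr_sumr; apply: eq_bigr => p _; rewrite mulrA.
Qed.

Lemma inJMr k r x : inJ k x -> inJ k (x * r).
Proof. by rewrite mulrC; apply: inJM. Qed.

Lemma inJN k x : inJ k x -> inJ k (- x).
Proof. by move=> H; rewrite -mulN1r; apply: inJM. Qed.

Lemma inJB k x y : inJ k x -> inJ k y -> inJ k (x - y).
Proof. by move=> Hx Hy; apply: inJD => //; apply: inJN. Qed.

Lemma inJ_gen k j : (j < k)%N -> inJ k (a j).
Proof.
move=> jk; exists [:: (1, j)]; split; first by move=> p; rewrite inE => /eqP ->.
by rewrite big_seq1 mul1r.
Qed.

Lemma inJ_mono k k' x : (k <= k')%N -> inJ k x -> inJ k' x.
Proof.
move=> kk [s [H ->]]; exists s; split => // p /H pk; exact: leq_trans pk kk.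
Qed.

Lemma inJ_sum k (I : Type) (r : seq I) (P : pred I) (F : I -> S) :
  (forall i, P i -> inJ k (F i)) -> inJ k (\sum_(i <- r | P i) F i).
Proof.
move=> H; elim: r => [|i r IH]; first by rewrite big_nil; apply: inJ0.
rewrite big_cons; case: ifP => Pi //; apply: inJD => //; exact: H.
Qed.

Lemma inJ_sum_seq k (I : eqType) (r : seq I) (P : pred I) (F : I -> S) :
  (forall i, i \in r -> P i -> inJ k (F i)) -> inJ k (\sum_(i <- r | P i) F i).
Proof.
move=> H; rewrite big_seq_cond; apply: inJ_sum => i /andP [ir Pi]; exact: H.
Qed.

(* polynomials as lists of (coef, word) *)
Definition mon (w : seq nat) : S := \prod_(j <- w) a j.
Definition ev (p : seq (S * seq nat)) : S := \sum_(q <- p) q.1 * mon q.2.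
Definition hom (n k : nat) (p : seq (S * seq nat)) : Prop :=
  forall q, q \in p -> size q.2 = n /\ all (fun j => (j < k)%N) q.2.
Definition coef (p : seq (S * seq nat)) (m : seq nat) : S :=
  \sum_(q <- p | perm_eq q.2 m) q.1.
Definition Pow (k n : nat) (x : S) : Prop := exists p, hom n k p /\ x = ev p.
Definition sc (r : S) (p : seq (S * seq nat)) := map (fun q => (r * q.1, q.2)) p.

Lemma ev_cat p1 p2 : ev (p1 ++ p2) = ev p1 + ev p2.
Proof. by rewrite /ev big_cat. Qed.
Lemma coef_cat p1 p2 m : coef (p1 ++ p2) m = coef p1 m + coef p2 m.
Proof. by rewrite /coef big_cat. Qed.
Lemma ev_sc r p : ev (sc r p) = r * ev p.
Proof. by rewrite /ev big_map mulr_sumr; apply: eq_bigr => q _; rewrite mulrA. Qed.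
Lemma coef_sc r p m : coef (sc r p) m = r * coef p m.
Proof. by rewrite /coef big_map mulr_sumr. Qed.
Lemma hom_cat n k p1 p2 : hom n k p1 -> hom n k p2 -> hom n k (p1 ++ p2).
Proof. by move=> H1 H2 q; rewrite mem_cat => /orP [/H1|/H2]. Qed.
Lemma hom_sc n k r p : hom n k p -> hom n k (sc r p).
Proof. by move=> H q /mapP [q' /H qH ->]. Qed.
Lemma hom_mono n k k' p : (k <= k')%N -> hom n k p -> hom n k' p.
Proof.
move=> kk H q /H [s1 al]; split => //; apply/allP => j /(allP al) jk.
exact: leq_trans jk kk.
Qed.

Lemma mon_perm w w' : perm_eq w w' -> mon w = mon w'.
Proof. by move=> pw; rewrite /mon (perm_big _ pw). Qed.

Definition lower (p : seq (S * seq nat)) :=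
  map (fun q => (q.1 * a (head 0%N q.2), behead q.2)) p.

Lemma lowerP n k p : hom n.+1 k p ->
  [/\ hom n k (lower p), ev (lower p) = ev p & forall m, inJ k (coef (lower p) m)].
Proof.
move=> H; split.
- move=> q /mapP [[c w] /H /= [sw al] ->] /=; split; first by rewrite size_behead sw.
  by case: w sw al => //= j w _ /andP [].
- rewrite /ev big_map; apply: eq_big_seq => [[c w]] /H /= [sw _].
  by case: w sw => //= j w _; rewrite /mon big_cons mulrA.
- move=> m; apply: inJ_sum_seq => q /mapP [[c w] /H /= [sw al] ->] _ /=.
  by apply: inJM; case: w sw al => //= j w _ /andP [jk _]; exact: inJ_gen.
Qed.

Lemma Pow_lower k n x : Pow k n.+1 x -> Pow k n x.
Proof.
move=> [p [H ->]]; have [H1 H2 _] := lowerP H; by exists (lower p).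
Qed.

Lemma Pow0 k n : Pow k n 0.
Proof. by exists [::]; split => //; rewrite /ev big_nil. Qed.
Lemma PowD k n x y : Pow k n x -> Pow k n y -> Pow k n (x + y).
Proof.
move=> [p1 [H1 ->]] [p2 [H2 ->]]; exists (p1 ++ p2); split; first exact: hom_cat.
by rewrite ev_cat.
Qed.
Lemma PowM k n r x : Pow k n x -> Pow k n (r * x).
Proof.
move=> [p [H ->]]; exists (sc r p); split; first exact: hom_sc. by rewrite ev_sc.
Qed.
Lemma Pow_gen k n r w : size w = n -> all (fun j => (j < k)%N) w -> Pow k n (r * mon w).
Proof.
move=> sw al; exists [:: (r, w)]; split; first by move=> q; rewrite inE => /eqP ->.
by rewrite /ev big_seq1.
Qed.
Lemma Pow_sum k n (I : Type) (r : seq I) (P : pred I) (F : I -> S) :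
  (forall i, P i -> Pow k n (F i)) -> Pow k n (\sum_(i <- r | P i) F i).
Proof.
move=> H; elim: r => [|i r IH]; first by rewrite big_nil; apply: Pow0.
rewrite big_cons; case: ifP => Pi //; apply: PowD => //; exact: H.
Qed.

Lemma group_sum (X : eqType) (Y : eqType) (s : seq X) (key : X -> Y) (F : X -> S) :
  \sum_(x <- s) F x = \sum_(y <- undup (map key s)) \sum_(x <- s | key x == y) F x.
Proof.
under [RHS]eq_bigr do rewrite big_mkcond.
rewrite exchange_big /=; apply: eq_big_seq => x xs.
rewrite (bigD1_seq (key x)) ?undup_uniq ?mem_undup ?map_f //= eqxx big1 ?addr0 //.
by move=> y /negPf; rewrite eq_sym => ->.
Qed.

Lemma perm_sort_eq (w m : seq nat) :
  perm_eq w m = (sort leq w == sort leq m).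
Proof.
apply/idP/eqP => [/(perm_sortP leq_total leq_trans anti_leq) //|].
by move/(perm_sortP leq_total leq_trans anti_leq).
Qed.

Lemma Pow_coefJ n k p : hom n k p -> (forall m, inJ k (coef p m)) ->
  Pow k n.+1 (ev p).
Proof.
move=> H HJ.
have E : ev p = \sum_(q <- p) q.1 * mon (sort leq q.2).
  by apply: eq_bigr => q _; rewrite (mon_perm (w := q.2) (w' := sort leq q.2)) // perm_sym perm_sort.
rewrite E (group_sum _ (fun q => sort leq q.2)).
rewrite big_seq; apply: Pow_sum => m; rewrite mem_undup => /mapP [[c w] qp ->] /=.
have [sw al] := H _ qp; rewrite /= in sw al.
have -> : \sum_(q <- p | sort leq q.2 == sort leq w) q.1 * mon (sort leq q.2)
   = coef p w * mon (sort leq w).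
  rewrite /coef mulr_suml; apply: eq_big => q; first by rewrite perm_sort_eq.
  by move/eqP ->.
have [s0 [Hs ->]] := HJ w; rewrite mulr_suml big_seq; apply: Pow_sum => [[r j]] /Hs /= jk.
have -> : r * a j * mon (sort leq w) = r * mon (j :: sort leq w).
  by rewrite /mon big_cons mulrA.
apply: Pow_gen; first by rewrite /= size_sort sw.
by rewrite /= all_sort al andbT.
Qed.

Lemma coef_hom0 k p m : hom 0 k p -> coef p m = if perm_eq [::] m then ev p else 0.
Proof.
move=> H; rewrite /coef /ev; case: ifP => pm.
  rewrite big_seq_cond [RHS]big_seq; apply: eq_big => q.
    case qp: (q \in p) => //=; have [/size0nil -> _] := H q qp; exact: pm.
  move=> /andP [qp _]; have [/size0nil -> _] := H q qp; by rewrite /mon big_nil mulr1.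
rewrite big_seq_cond big_pred0 // => q; case qp: (q \in p) => //=.
by have [/size0nil -> _] := H q qp; rewrite pm.
Qed.

Definition Qprop d := forall n p, hom n d p -> ev p = 0 -> forall m, inJ d (coef p m).
Definition NZD d := forall y, inJ d (a d * y) -> inJ d y.

Lemma L1 d : Qprop d -> NZD d -> forall n y, Pow d n (a d * y) -> Pow d n y.
Proof.
move=> HQ HN; elim=> [|n IH] y Hy.
  by have := @Pow_gen d 0 y [::] erefl erefl; rewrite /mon big_nil mulr1.
have /IH [G [HG Gy]] := Pow_lower Hy.
have [K [HK Ky]] := Hy.
have [HK1 HK2 HK3] := lowerP HK.
have E : ev (sc (a d) G ++ sc (-1) (lower K)) = 0.
  by rewrite ev_cat !ev_sc HK2 -Ky -Gy mulN1r subrr.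
have HQ' := HQ _ _ (hom_cat (hom_sc (r:=a d) HG) (hom_sc (r:=-1) HK1)) E.
rewrite Gy; apply: Pow_coefJ => // m; apply: HN.
have := HQ' m; rewrite coef_cat !coef_sc mulN1r => H1.
by rewrite -(subrK (coef (lower K) m) (a d * coef G m)); apply: inJD.
Qed.

Lemma Qstep d : Qprop d -> NZD d -> Qprop d.+1.
Proof.
move=> HQ HN; elim=> [|n IH] p Hp Ep m.
  by rewrite (coef_hom0 m Hp) Ep; case: ifP => _; apply: inJ0.
pose x := d.
pose G := filter (fun q => x \notin q.2) p.
pose H := map (fun q => (q.1, rem x q.2)) (filter (fun q => x \in q.2) p).
have HG : hom n.+1 d G.
  move=> q; rewrite mem_filter => /andP [xq /Hp [sq al]]; split => //.
  apply/allP => j jq; have := allP al j jq; rewrite ltnS leq_eqVlt => /orP [/eqP ejd|//].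
  by move: xq; rewrite /x -ejd jq.
have HH : hom n d.+1 H.
  move=> q /mapP [q' ]; rewrite mem_filter => /andP [xq /Hp [sq al]] -> /=.
  split; first by rewrite size_rem // sq.
  by apply/allP => j /mem_rem /(allP al).
have Eev : ev p = ev G + a x * ev H.
  rewrite /ev (bigID (fun q => x \in q.2)) /= addrC big_filter; congr (_ + _).
  rewrite big_map big_filter mulr_sumr; apply: eq_bigr => q xq /=.
  by rewrite (mon_perm (perm_to_rem xq)) /mon big_cons mulrCA.
have Hx : Pow d n.+1 (a d * ev H).
  have -> : a d * ev H = (-1) * ev G by rewrite mulN1r; apply/eqP; rewrite -addr_eq0 addrC -Eev Ep.
  by apply: PowM; exists G.
have [P [HP EP]] := L1 HQ HN Hx.
have Hxd : inJ d.+1 (a x) by apply: inJ_gen.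
have cG : forall m, inJ d.+1 (coef G m).
  move=> m'; have E1 : ev (G ++ sc (a x) P) = 0.
    by rewrite ev_cat ev_sc -EP -Ep Eev.
  have := HQ _ _ (hom_cat HG (hom_sc (r:=a x) HP)) E1 m'.
  rewrite coef_cat coef_sc => /(inJ_mono (leqnSn d)) H1.
  by rewrite -[coef G m'](addrK (a x * coef P m')); apply: inJB => //; apply: inJMr.
have [HP1 HP2 HP3] := lowerP HP.
have cH : forall m, inJ d.+1 (coef H m).
  move=> m'; have E1 : ev (H ++ sc (-1) (lower P)) = 0.
    by rewrite ev_cat ev_sc HP2 -EP mulN1r subrr.
  have := IH _ (hom_cat HH (hom_sc (r:=-1) (hom_mono (leqnSn d) HP1))) E1 m'.
  rewrite coef_cat coef_sc mulN1r => H1.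
  rewrite -[coef H m'](subrK (coef (lower P) m')); apply: inJD => //.
  exact: inJ_mono (leqnSn d) (HP3 m').
case xm: (x \in m).
  have -> : coef p m = coef H (rem x m); last exact: cH.
  rewrite /coef big_map big_filter_cond /=; apply: eq_bigl => q.
  case xq: (x \in q.2); last first.
    by apply/negbTE; apply/negP => /perm_mem /(_ x); rewrite xq xm.
  by rewrite /= (permPl (perm_to_rem xq)) (permPr (perm_to_rem xm)) perm_cons.
have -> : coef p m = coef G m; last exact: cG.
rewrite /coef big_filter_cond; apply: eq_bigl => q.
case pq: (perm_eq q.2 m); rewrite ?andbF ?andbT //.
by rewrite (perm_mem pq) xm.
Qed.

Lemma Qall d : (forall i, (i < d)%N -> NZD i) -> Qprop d.
Proof.
elim: d => [_|d IH Hd].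
  move=> n p Hp Ep m; case: n Hp => [|n] Hp.
    by rewrite (coef_hom0 m Hp) Ep; case: ifP => _; apply: inJ0.
  suff -> : coef p m = 0 by apply: inJ0.
  rewrite /coef big_seq_cond big_pred0 // => q; case qp: (q \in p) => //=.
  have [] := Hp q qp; case: q.2 => //= j w _; by rewrite ltn0.
apply: Qstep; last exact: Hd.
by apply: IH => i id; apply: Hd; exact: ltnW.
Qed.

End QR.
Definition pb (P : Prop) : bool := if excluded_middle_informative P then true else false.
Lemma pbP (P : Prop) : pb P = true <-> P.
Proof. by rewrite /pb; case: excluded_middle_informative. Qed.

Section Len.
Variable S : comNzRingType.
Variable V : lmodType S.

Lemma subD (P : V -> Prop) x y : is_submodule P -> P x -> P y -> P (x + y).
Proof. by move=> [_ H] Hx Hy; rewrite -[x]scale1r; apply: H. Qed.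
Lemma subZ (P : V -> Prop) r x : is_submodule P -> P x -> P (r *: x).
Proof. by move=> [H0 H] Hx; rewrite -[_ *: _]addr0; apply: H. Qed.
Lemma subB (P : V -> Prop) x y : is_submodule P -> P x -> P y -> P (x - y).
Proof. by move=> HP Hx Hy; apply: subD => //; rewrite -scaleN1r; apply: subZ. Qed.

Lemma chain_mono (B Z : V -> Prop) k c : strict_chain B Z k c ->
  forall i j, (i <= j <= k)%N -> forall x, c i x -> c j x.
Proof.
move=> [_ [_ [_ H]]] i j /andP [ij jk]; elim: j ij jk => [|j IH].
  by rewrite leqn0 => /eqP ->.
rewrite leq_eqVlt => /orP [/eqP -> //| ij] jk x cx.
by apply: (H j jk).1; apply: IH => //; exact: ltnW.
Qed.

Lemma strict_chain_ext (B Z B' Z' : V -> Prop) k c : (forall x, B x <-> B' x) -> (forall x, Z x <-> Z' x) ->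
  strict_chain B Z k c -> strict_chain B' Z' k c.
Proof.
move=> EB EZ [H1 [H2 [H3 H4]]]; split => //; split; last split => //.
  by move=> x; rewrite H2.
by move=> x; rewrite H3.
Qed.

Lemma qlen_ext (B Z B' Z' : V -> Prop) n : (forall x, B x <-> B' x) -> (forall x, Z x <-> Z' x) ->
  quot_length B Z n -> quot_length B' Z' n.
Proof.
move=> EB EZ [[c Hc] H]; split; first by exists c; exact: strict_chain_ext Hc.
move=> k c' Hc'; apply: (H k c'); apply: strict_chain_ext Hc' => x; [rewrite EB|rewrite EZ] => //.
Qed.

Lemma compress (X : V -> Prop) (M : nat) (d : nat -> V -> Prop) (T : nat -> bool) :
  (forall i, (i <= M)%N -> is_submodule (d i)) -> (forall x, d 0%N x <-> X x) ->
  (forall i, (i < M)%N -> forall x, d i x -> d i.+1 x) ->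
  (forall i, (i < M)%N -> T i -> exists x, d i.+1 x /\ ~ d i x) ->
  (forall i, (i < M)%N -> ~~ T i -> forall x, d i.+1 x -> d i x) ->
  forall N, (N <= M)%N -> exists e, strict_chain X (d N) (count T (iota 0 N)) e.
Proof.
move=> Hs H0 Hm Ht Hn; elim=> [_|N IH NM].
  exists (fun _ => d 0%N); split; first by move=> i _; apply: Hs.
  by split => //.
have [e He] := IH (ltnW NM).
have -> : iota 0 N.+1 = iota 0 N ++ [:: N] by rewrite -addn1 iotaD.
rewrite count_cat /= addn0.
set L := count T (iota 0 N) in He *.
have [HeS [He0 [HeL HeI]]] := He.
case TN: (T N) => /=.
  exists (fun i => if (i <= L)%N then e i else d N.+1); rewrite addn1; split.
    move=> i _; case: ifP => iL; [exact: HeS | exact: Hs].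
  split; first by move=> x /=; exact: He0.
  split; first by move=> x /=; rewrite ltnn.
  move=> i; rewrite ltnS => iL1; case: (eqVneq i L) => [->|neq]; last first.
    have iL : (i < L)%N by rewrite ltn_neqAle neq iL1.
    by rewrite /= iL (ltnW iL); apply: HeI.
    rewrite /= leqnn ltnn; split; first by move=> x /HeL /(Hm _ NM).
    have [x [x1 x2]] := Ht _ NM TN; exists x; split => // /HeL //.
exists e; rewrite addn0; apply: (strict_chain_ext _ _ He) => x; first by [].
split; [exact: Hm | apply: Hn => //; by rewrite TN].
Qed.

Lemma qlen_add (A B C : V -> Prop) m k :
  is_submodule A -> is_submodule B -> is_submodule C ->
  (forall x, A x -> B x) -> (forall x, B x -> C x) ->
  quot_length A B m -> quot_length B C k -> quot_length A C (m + k).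
Proof.
move=> SA SB SC AB BC [[c1 H1] U1] [[c2 H2] U2].
have [H1S [H10 [H1L H1I]]] := H1.
have [H2S [H20 [H2L H2I]]] := H2.
split.
  pose c i := if (i <= m)%N then c1 i else c2 (i - m)%N.
  have Ec : forall i, (m <= i)%N -> forall x, c i x <-> c2 (i - m)%N x.
    move=> i mi x; rewrite /c; case: ifP => im; last by [].
    have -> : i = m by apply/eqP; rewrite eqn_leq im mi.
    by rewrite subnn H1L H20.
  exists c; split.
    move=> i imk; rewrite /c; case: ifP => im; first exact: H1S.
    by apply: H2S; rewrite leq_subLR.
  split; first by move=> x; rewrite /c leq0n H10.
  split; first by move=> x; rewrite Ec ?leq_addr // addKn H2L.
  move=> i imk; case: (leqP m i) => mi.
    have ik : (i - m < k)%N by rewrite ltn_subLR.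
    have [X1 [x [X2 X3]]] := H2I _ ik.
    split; first by move=> y; rewrite Ec // Ec ?(leq_trans mi) // subSn // => /X1.
    by exists x; rewrite Ec ?(leq_trans mi) // Ec // subSn //.
  rewrite /c (ltnW mi) mi; exact: H1I.
move=> N c Hc; have [HS [H0 [HN HI]]] := Hc.
have cC : forall i, (i <= N)%N -> forall x, c i x -> C x.
  by move=> i iN x cx; apply/HN; apply: (chain_mono Hc) cx; rewrite iN leqnn.
have Ac : forall i, (i <= N)%N -> forall x, A x -> c i x.
  by move=> i iN x /H0 cx; apply: (chain_mono Hc) cx; rewrite iN leq0n.
pose d1 i := fun x => c i x /\ B x.
pose d2 i := fun x => exists u v, c i u /\ B v /\ x = u + v.
pose T1 i := pb (exists x, d1 i.+1 x /\ ~ d1 i x).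
pose T2 i := pb (exists x, d2 i.+1 x /\ ~ d2 i x).
have S1 : forall i, (i <= N)%N -> is_submodule (d1 i).
  move=> i iN; have [Sc0 Sc] := HS i iN; have [SB0 SB'] := SB.
  by split => [|r x y [x1 x2] [y1 y2]]; split => //; [apply: Sc | apply: SB'].
have S2 : forall i, (i <= N)%N -> is_submodule (d2 i).
  move=> i iN; have [Sc0 Sc] := HS i iN; have [SB0 SB'] := SB.
  split; first by exists 0, 0; rewrite addr0.
  move=> r x y [u [v [cu [Bv ->]]]] [u' [v' [cu' [Bv' ->]]]].
  exists (r *: u + u'), (r *: v + v'); split; first exact: Sc.
  by split; [apply: SB' | rewrite scalerDr addrACA].
have M1 : forall i, (i < N)%N -> forall x, d1 i x -> d1 i.+1 x.
  by move=> i iN x [cx Bx]; split => //; apply: (HI _ iN).1.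
have M2 : forall i, (i < N)%N -> forall x, d2 i x -> d2 i.+1 x.
  by move=> i iN x [u [v [cu [Bv ->]]]]; exists u, v; split => //; apply: (HI _ iN).1.
have T1t : forall i, (i < N)%N -> T1 i -> exists x, d1 i.+1 x /\ ~ d1 i x.
  by move=> i _ /pbP.
have T2t : forall i, (i < N)%N -> T2 i -> exists x, d2 i.+1 x /\ ~ d2 i x.
  by move=> i _ /pbP.
have T1f : forall i, (i < N)%N -> ~~ T1 i -> forall x, d1 i.+1 x -> d1 i x.
  move=> i _ /negP nT x dx; apply: NNPP => ndx; apply: nT; apply/pbP; by exists x.
have T2f : forall i, (i < N)%N -> ~~ T2 i -> forall x, d2 i.+1 x -> d2 i x.
  move=> i _ /negP nT x dx; apply: NNPP => ndx; apply: nT; apply/pbP; by exists x.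
have D10 : forall x, d1 0%N x <-> A x.
  move=> x; split; first by move=> [/H0]. by move=> Ax; split; [apply/H0 | apply: AB].
have D20 : forall x, d2 0%N x <-> B x.
  move=> x; split; first by move=> [u [v [/H0 /AB Bu [Bv ->]]]]; apply: subD.
  by move=> Bx; exists 0, x; rewrite add0r; split => //; have [] := HS 0%N (leq0n _).
have D1N : forall x, d1 N x <-> B x.
  by move=> x; split; [case | move=> Bx; split => //; apply/HN/BC].
have D2N : forall x, d2 N x <-> C x.
  move=> x; split; first by move=> [u [v [/HN Cu [/BC Cv ->]]]]; apply: subD.
  by move=> /HN cx; exists x, 0; rewrite addr0; split => //; have [] := SB.
have [e1 He1] := compress S1 D10 M1 T1t T1f (leqnn N).
have [e2 He2] := compress S2 D20 M2 T2t T2f (leqnn N).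
have L1 := U1 _ _ (strict_chain_ext (fun x => iff_refl _) D1N He1).
have L2 := U2 _ _ (strict_chain_ext (fun x => iff_refl _) D2N He2).
have Ti : forall i, (i < N)%N -> T1 i || T2 i.
  move=> i iN; case E1: (T1 i) => //; case E2: (T2 i) => //=; exfalso.
  have nT1 : ~~ T1 i by rewrite E1. have nT2 : ~~ T2 i by rewrite E2.
  have F1 := T1f i iN nT1; have F2 := T2f i iN nT2.
  have [_ [x [x1 x2]]] := HI _ iN; apply: x2.
  have [u [v [cu [Bv Ex]]]] := F2 x (ex_intro _ x (ex_intro _ 0 (conj x1 (conj (proj1 SB) (esym (addr0 x)))))).
  have [cv _] : d1 i v.
    apply: F1; split => //; have -> : v = x - u by rewrite Ex addrC addKr.
    apply: subB; [exact: HS | exact: x1 | exact: (HI _ iN).1].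
  rewrite Ex; apply: subD => //; apply: HS; exact: ltnW.
apply: leq_trans (leq_add L1 L2).
rewrite -count_predUI (leq_trans _ (leq_addr _ _)) //.
rewrite -{1}(size_iota 0 N) -count_predT; apply: eq_leq; apply: eq_in_count => i.
by rewrite mem_iota add0n => /andP [_ /Ti] /= ->.
Qed.

Lemma qlen_transport (W : lmodType S) (phi : V -> W) (B Z : V -> Prop) n :
  (forall r x y, phi (r *: x + y) = r *: phi x + phi y) ->
  is_submodule B -> is_submodule Z -> (forall x, B x -> Z x) ->
  (forall w, exists z, Z z /\ phi z = w) ->
  (forall z, Z z -> (B z <-> phi z = 0)) ->
  quot_length (fun w : W => w = 0) (fun _ => True) n -> quot_length B Z n.
Proof.
move=> Hl SB SZ BZ Hsur Hker [[c Hc] U].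
have phiD : forall x y, phi (x + y) = phi x + phi y.
  by move=> x y; have := Hl 1 x y; rewrite !scale1r.
have phi0 : phi 0 = 0.
  by apply: (addrI (phi 0)); rewrite addr0 -phiD addr0.
have phiB : forall x y, phi (x - y) = phi x - phi y.
  by move=> x y; have := Hl (-1) y x; rewrite !scaleN1r addrC => ->; rewrite addrC.
have [HS [H0 [HN HI]]] := Hc.
split.
  exists (fun i z => Z z /\ c i (phi z)); split.
    move=> i ik; have [c0 cS] := HS i ik; split; first by split; [have [] := SZ | rewrite phi0].
    move=> r x y [Zx cx] [Zy cy]; split; first by have [_ ] := SZ; apply.
    by rewrite Hl; apply: cS.
  split.
    move=> x; split; first by move=> [Zx /H0 px]; apply/(Hker x Zx).
    by move=> Bx; have Zx := BZ x Bx; split => //; apply/H0; apply/(Hker x Zx).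
  split; first by move=> x; split; [case | move=> Zx; split => //; apply/HN].
  move=> i ik; have [HI1 [w [w1 w2]]] := HI i ik; split.
    by move=> x [Zx cx]; split => //; apply: HI1.
  have [z [Zz Ez]] := Hsur w; exists z; rewrite Ez; split => //.
  by move=> [_ cw].
move=> k c' Hc'; have [HS' [H0' [HN' HI']]] := Hc'.
have cZ : forall i, (i <= k)%N -> forall x, c' i x -> Z x.
  by move=> i ik x cx; apply/HN'; apply: (chain_mono Hc') cx; rewrite ik leqnn.
have Bc : forall i, (i <= k)%N -> forall x, B x -> c' i x.
  by move=> i ik x /H0' cx; apply: (chain_mono Hc') cx; rewrite ik leq0n.
apply: (U k (fun i w => exists z, c' i z /\ phi z = w)); split.
  move=> i ik; have [c0 cS] := HS' i ik; split; first by exists 0.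
  move=> r x y [z1 [c1 <-]] [z2 [c2 <-]]; exists (r *: z1 + z2); split; first exact: cS.
  by rewrite Hl.
split.
  move=> w; split; first by move=> [z [/H0' Bz <-]]; apply/Hker => //; apply: BZ.
  by move=> ->; exists 0; split => //; apply/H0'; have [] := SB.
split; first by move=> w; split => // _; have [z [Zz <-]] := Hsur w; exists z; split => //; apply/HN'.
move=> i ik; have [HI1 [x [x1 x2]]] := HI' i ik; split.
  by move=> w [z [cz <-]]; exists z; split => //; apply: HI1.
exists (phi x); split; first by exists x.
move=> [z [cz Ez]]; apply: x2.
have Zx : Z x by apply: cZ x1.
have Zz : Z z by apply: (cZ i) cz; exact: ltnW.
have Bxz : B (x - z) by apply/Hker; [apply: subB | rewrite phiB Ez subrr].
have -> : x = (x - z) + z by rewrite subrK.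
have [_ cS] := HS' i (ltnW ik); rewrite -[x - z]scale1r; apply: cS => //.
by apply: Bc => //; exact: ltnW.
Qed.

Lemma qlen_refl (B : V -> Prop) : is_submodule B -> quot_length B B 0.
Proof.
move=> SB; split.
  by exists (fun _ => B); split => //.
move=> k c Hc; case: k Hc => // k Hc; exfalso.
have [_ [H0 [HN HI]]] := Hc; have [_ [x [x1 x2]]] := HI 0%N (ltn0Sn k).
apply: x2; apply/H0/HN; apply: (chain_mono Hc) x1; by rewrite ltn0Sn leqnn.
Qed.

End Len.

Section Prod.
Variable S : comNzRingType.
Variable L : lmodType S.
Variable K : finType.

Lemma qlen_prod l : module_length L l ->
  quot_length (fun f : {ffun K -> L} => f = 0) (fun _ => True) (#|K| * l).
Proof.
move=> HL.
pose P (j : nat) := fun f : {ffun K -> L} => forall x : K, (j <= enum_rank x)%N -> f x = 0.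
have SP : forall j, is_submodule (P j).
  move=> j; split; first by move=> x _; rewrite ffunE.
  by move=> r f g Pf Pg x jx; rewrite !ffunE Pf // Pg // scaler0 addr0.
have Pmono : forall j x, P j x -> P j.+1 x by move=> j f Pf x jx; apply: Pf; exact: ltnW.
have step : forall j, (j < #|K|)%N -> quot_length (P j) (P j.+1) l.
  move=> j jK; pose j' := Ordinal jK.
  apply: (qlen_transport (W:=L) (phi:=fun f : {ffun K -> L} => f (enum_val j'))) HL => //.
  - by move=> r f g; rewrite !ffunE.
  - exact: Pmono.
  - move=> y; exists [ffun x => if x == enum_val j' then y else 0]; split; last by rewrite ffunE eqxx.
    move=> x jx; rewrite ffunE; case: eqP => // ex.
    by move: jx; rewrite ex enum_valK /= ltnn.
  - move=> f Pf; split; first by move=> Pjf; apply: Pjf; rewrite enum_valK.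
    move=> f0 x; rewrite leq_eqVlt => /orP [/eqP ejx|]; last exact: Pf.
    suff -> : x = enum_val j' by [].
    by rewrite -[x]enum_rankK; congr enum_val; apply: val_inj.
have P0 : forall f, P 0%N f <-> f = 0.
  move=> f; split; last by move=> -> x _; rewrite ffunE.
  by move=> Pf; apply/ffunP => x; rewrite ffunE; apply: Pf.
have PK : forall f, P #|K| f <-> True.
  by move=> f; split => // _ x; rewrite leqNgt ltn_ord.
suff H : forall j, (j <= #|K|)%N -> quot_length (P 0%N) (P j) (j * l).
  by apply: qlen_ext (H _ (leqnn _)).
elim=> [_|j IH jK]; first by rewrite mul0n; apply: qlen_refl.
rewrite mulSnr; apply: qlen_add (IH (ltnW jK)) (step _ jK) => //.
  by move=> f Pf x _; apply: Pf.
exact: Pmono.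
Qed.

End Prod.
Section Ideal.
Variable S : comNzRingType.

Lemma ideal_of0 (I : Type) (Q : I -> Prop) (g : I -> S) : ideal_of Q g 0.
Proof. by exists [::]; split => //; rewrite big_nil. Qed.

Lemma ideal_ofD (I : Type) (Q : I -> Prop) (g : I -> S) x y :
  ideal_of Q g x -> ideal_of Q g y -> ideal_of Q g (x + y).
Proof.
move=> [s1 [H1 ->]] [s2 [H2 ->]]; exists (s1 ++ s2); split; last by rewrite big_cat.
by move=> p Hp; case: (List.in_app_or _ _ _ Hp) => [/H1|/H2].
Qed.

Lemma ideal_of_gen (I : Type) (Q : I -> Prop) (g : I -> S) c j :
  Q j -> ideal_of Q g (c * g j).
Proof.
move=> Qj; exists [:: (c, j)]; split; last by rewrite big_seq1.
by move=> p [<-|].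
Qed.

End Ideal.

Section Main.
Variable S : comNzRingType.
Variable d : nat.
Variable a : 'I_d -> S.

Definition a' (j : nat) : S := if insub j is Some o then a o else 0.
Lemma a'E (o : 'I_d) : a' (val o) = a o.
Proof. by rewrite /a' valK. Qed.

Lemma inJ_ideal i x : inJ a' i x -> ideal_of (fun j : 'I_d => (j < i)%N) a x.
Proof.
move=> [s [Hs ->]]; elim: s Hs => [|[c j] s IH] Hs; first by rewrite big_nil; apply: ideal_of0.
rewrite big_cons; apply: ideal_ofD; last by apply: IH => p ps; apply: Hs; rewrite inE ps orbT.
have ji : (j < i)%N by apply: (Hs (c, j)); rewrite inE eqxx.
rewrite /= /a'; case: insubP => [o _ oj|_]; last by rewrite mulr0; apply: ideal_of0.
by apply: ideal_of_gen; rewrite oj.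
Qed.

Lemma ideal_inJ i x : ideal_of (fun j : 'I_d => (j < i)%N) a x -> inJ a' i x.
Proof.
move=> [s [Hs ->]]; elim: s Hs => [|[c j] s IH] Hs; first by rewrite big_nil; apply: inJ0.
rewrite big_cons; apply: inJD; last by apply: IH => p ps; apply: Hs; right.
have ji : (j < i)%N by apply: (Hs (c, j)); left.
by rewrite /= -a'E; apply: inJM; apply: inJ_gen.
Qed.

End Main.

Section Tor.
Variable S : comNzRingType.
Variable d : nat.
Variable a : 'I_d -> S.
Variable L : lmodType S.
Variable n : nat.

Local Notation I := (n.-tuple 'I_d).
Local Notation g := (@pow_gens S d n a).
Local Notation V := {ffun I -> L}.
Definition leo := relpre (val : 'I_d -> nat) leq.
Local Notation K := {t : I | sorted leo t}.

Lemma leo_total : total leo. Proof. by move=> x y; apply: leq_total. Qed.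
Lemma leo_trans : transitive leo. Proof. by move=> x y z; apply: leq_trans. Qed.
Lemma leo_anti : antisymmetric leo.
Proof. by move=> x y /anti_leq /val_inj. Qed.

Definition srt (t : I) : K := exist _ (sort_tuple leo t) (sort_sorted leo_total t).
Definition rep (t : I) : I := val (srt t).

Lemma srtK (m : K) : srt (val m) = m.
Proof. by apply: val_inj; apply: val_inj; rewrite /= (sorted_sort leo_trans (valP m)). Qed.

Lemma perm_srt (t : I) (m : K) : perm_eq (map val t) (map val (val m)) = (srt t == m).
Proof.
apply/idP/eqP => [/perm_map_inj H|<-].
  rewrite -(srtK m); apply: val_inj; apply: val_inj => /=.
  by apply/(perm_sortP leo_total leo_trans leo_anti); apply: H; exact: val_inj.
by apply: perm_map; rewrite /= perm_sym perm_sort.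
Qed.

Lemma g_rep t : g (rep t) = g t.
Proof. by rewrite /pow_gens /rep /=; apply: perm_big; rewrite perm_sort. Qed.

Definition phi (f : V) : {ffun K -> L} := [ffun m => \sum_(t | srt t == m) f t].

Lemma phi_lin r x y : phi (r *: x + y) = r *: phi x + phi y.
Proof.
apply/ffunP => m; rewrite !ffunE scaler_sumr -big_split /=.
by apply: eq_bigr => t _; rewrite !ffunE.
Qed.

Lemma phi_sur w : exists z : V, phi z = w.
Proof.
exists [ffun t => if rep t == t then w (srt t) else 0]; apply/ffunP => m.
rewrite ffunE (bigD1 (val m)) ?srtK //= ffunE /rep srtK eqxx big1 ?addr0 //.
move=> t /andP [/eqP st nt]; rewrite ffunE /rep st; case: eqP => // e.
by move: nt; rewrite e eqxx.
Qed.

Variable ann : annihilates (ideal_of (fun _ => True) a) L.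
Variable reg : regular_sequence a.
Variable n1 : (1 <= n)%N.

Lemma ideal_of_weaken (Q Q' : 'I_d -> Prop) x :
  (forall j, Q j -> Q' j) -> ideal_of Q a x -> ideal_of Q' a x.
Proof. by move=> HQ [s [Hs ->]]; exists s; split => // p /Hs /HQ. Qed.

Lemma g_ideal t : ideal_of (fun _ => True) a (g t).
Proof.
case: t => [[|x w] sw]; first by exfalso; move: n1; rewrite -(eqP sw).
by rewrite /pow_gens /= big_cons mulrC; apply: ideal_of_gen.
Qed.

Lemma cycles_all (f : V) : tor1_cycles g f.
Proof. by rewrite /tor1_cycles big1 // => t _; apply: ann; apply: g_ideal. Qed.

Lemma Qd : Qprop (a' a) d.
Proof.
apply: Qall => i id y H; apply: ideal_inJ.
have := reg.1 (Ordinal id) y; rewrite /= -(a'E a (Ordinal id)) /=; apply.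
exact: inJ_ideal.
Qed.

Lemma syz_coef (k : I -> S) (m : K) : syzygy g k ->
  ideal_of (fun _ => True) a (\sum_(t | srt t == m) k t).
Proof.
move=> Hk; pose pp := [seq (k t, map val t) | t <- index_enum I].
have Hp : hom n d pp.
  move=> q /mapP [t _ ->] /=; split; first by rewrite size_map size_tuple.
  by rewrite all_map; apply/allP => j _ /=.
have Ep : ev (a' a) pp = 0.
  rewrite /ev big_map -[RHS]Hk; apply: eq_bigr => t _ /=.
  by rewrite /mon big_map /pow_gens; congr (_ * _); apply: eq_bigr => j _; rewrite a'E.
have := Qd Hp Ep (map val (val m)) => /inJ_ideal /(ideal_of_weaken (Q' := fun _ => True)).
rewrite /coef big_map => /(_ (fun _ _ => Logic.I)).
by under eq_bigl do rewrite /= perm_srt.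
Qed.

Lemma phiD (x y : V) : phi (x + y) = phi x + phi y.
Proof. by have := phi_lin 1 x y; rewrite !scale1r; apply. Qed.

Lemma phi0 : phi 0 = 0.
Proof. by apply/ffunP => m; rewrite !ffunE big1 // => t _; rewrite ffunE. Qed.

Lemma ker1 (f : V) : tor1_boundaries g f -> phi f = 0.
Proof.
move=> [s [Hs ->]]; elim: s Hs => [|p s IH] Hs; first by rewrite big_nil phi0.
rewrite big_cons phiD IH ?addr0; last first.
  by move=> q qs; apply: Hs; right.
have Hp : syzygy g p.1 by apply: Hs; left.
apply/ffunP => m; rewrite !ffunE.
under eq_bigr do rewrite ffunE.
by rewrite -scaler_suml; apply: ann; apply: syz_coef.
Qed.

Definition kk (t : I) : I -> S := fun u => (u == t)%:R - (u == rep t)%:R.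

Lemma sum_delta (t : I) (F : I -> S) : \sum_u (u == t)%:R * F u = F t.
Proof.
rewrite (bigD1 t) //= eqxx mul1r big1 ?addr0 // => u /negPf ->; by rewrite mul0r.
Qed.

Lemma ker2 (f : V) : phi f = 0 -> tor1_boundaries g f.
Proof.
move=> Hf; exists [seq (kk t, f t) | t <- index_enum I]; split.
  move=> p /List.in_map_iff [t [<- _]] /=.
  by rewrite /syzygy /kk; under eq_bigr do rewrite mulrBl; rewrite sumrB !sum_delta g_rep subrr.
rewrite big_map; apply/ffunP => u; rewrite sum_ffunE.
under eq_bigr do rewrite ffunE /kk scalerBl.
rewrite sumrB.
have -> : \sum_t (u == t)%:R *: f t = f u.
  rewrite (bigD1 u) //= eqxx scale1r big1 ?addr0 // => v /negPf; rewrite eq_sym => ->.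
  by rewrite scale0r.
have -> : \sum_t (u == rep t)%:R *: f t = 0; last by rewrite subr0.
case su: (sorted leo u).
  pose m : K := exist _ u su.
  have E : \sum_(t | srt t == m) f t = 0 by move/ffunP/(_ m): Hf; rewrite !ffunE.
  transitivity (\sum_(t | srt t == m) f t); last exact: E.
  rewrite [RHS]big_mkcond; apply: eq_bigr => t _; rewrite eq_sym.
  have -> : (rep t == u) = (srt t == m) by rewrite /rep -(inj_eq val_inj).
  by case: eqP => _; rewrite ?scale1r ?scale0r.
rewrite big1 // => t _; case: eqP => [e|_]; last by rewrite scale0r.
by move: su; rewrite e /rep (valP (srt t)).
Qed.

Lemma B_sub : is_submodule (tor1_boundaries g (L := L)).
Proof.
split; first by exists [::]; split => //; rewrite big_nil.
move=> r x y [s1 [H1 ->]] [s2 [H2 ->]].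
exists (map (fun p => (p.1, r *: p.2)) s1 ++ s2); split.
  move=> p Hp; case: (List.in_app_or _ _ _ Hp) => [/List.in_map_iff [q [<- /H1]] //|/H2 //].
rewrite big_cat big_map scaler_sumr; congr (_ + _); apply: eq_bigr => p _.
by apply/ffunP => i; rewrite !ffunE scalerA mulrC -scalerA.
Qed.

Lemma main_len l : module_length L l ->
  quot_length (tor1_boundaries g (L := L)) (tor1_cycles g (L := L)) (#|{: K}| * l).
Proof.
move=> HL; apply: (qlen_transport (W := {ffun K -> L}) (phi := phi)).
- exact: phi_lin.
- exact: B_sub.
- by split => *; apply: cycles_all.
- by move=> *; apply: cycles_all.
- by move=> w; have [z Hz] := phi_sur w; exists z; split => //; apply: cycles_all.
- by move=> z _; split; [apply: ker1 | apply: ker2].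
- exact: qlen_prod.
Qed.

End Tor.

Lemma cardK d n : (1 <= n)%N ->
  #|{: {t : n.-tuple 'I_d | sorted (@leo d) t}}| = binomZ (n + d - 1) (d%:Z - 1).
Proof.
move=> n1; case: d => [|d].
  rewrite [RHS]/=; apply: eq_card0 => -[t st]; move: st; case: t => [[|x w] sw] st.
    by exfalso; move: n1; rewrite -(eqP sw).
  by exfalso; have := ltn_ord x; rewrite ltn0.
rewrite addnS subn1 /= subn1 /= card_sig.
have -> : #|[pred x : n.-tuple 'I_d.+1 | sorted (@leo d.+1) x]| =
   #|[set t : n.-tuple 'I_d.+1 | sorted leq (map val t)]|.
  by apply: eq_card => t; rewrite inE /= sorted_map.
rewrite card_sorted_tuples -[n in 'C(_, n)](addnK d n) bin_sub //.
exact: leq_addl.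
Qed.

Theorem mainTheorem3 (S : comNzRingType) (d : nat) (a : 'I_d -> S)
  (L : lmodType S) (l : nat) :
  local_ring S ->
  regular_sequence a ->
  module_length L l ->
  annihilates (ideal_of (fun _ => True) a) L ->
  forall n : nat, (1 <= n)%N ->
    tor1_length (@pow_gens S d n a) L (binomZ (n + d - 1) (d%:Z - 1) * l)%N.
Proof.
move=> _ reg HL ann n n1.
have H := main_len ann reg n1 HL; rewrite (cardK d n1) in H; exact: H.
Qed.
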